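(* Consider the network Polya contagion process on a connected undirected graph $\mathcal{G}=(V,\mathcal{E})$ with $\Delta_{r,i}(n)=\Delta_{b,i}(n)=\Delta$ and $T_i=T$ for all nodes $i\in V$ and all times $n$. Fix a node $i$. Then the individual red-ball proportion process $\{U_{i,n}\}_{n=1}^\infty$ is a martingale with respect to the whole-network draw process $\{Z_n\}_{n=1}^\infty=\{(Z_{1,n},\dots,Z_{N,n})\}_{n=1}^\infty$ if and only if, almost surely (for all $n$), \[ \frac{1}{|\mathcal{N}_i|}\sum_{j\in\mathcal{N}_i}U_{j,n-1}=U_{i,n-1}. \]
   Context: Network Polya contagion process: $\mathcal{G}=(V,\mathcal{E})$ is a connected undirected graph without self-loops, $V=\{1,\dots,N\}$, $\mathcal{N}_i=\{v:(i,v)\in\mathcal{E}\}$, $\mathcal{N}_i'=\{i\}\cup\mathcal{N}_i$. Each node $i$ has an urn initially containing $R_i\in\mathbb{Z}_{>0}$ red and $B_i\in\mathbb{Z}_{>0}$ black balls, $T_i=R_i+B_i$. The super urn of node $i$ is the union of the urns of nodes in $\mathcal{N}_i'$. At each time $t=1,2,\dots$ every node $i$ simultaneously draws from its super urn; $Z_{i,t}=1$ if red, $0$ if black; then $\Delta_{r,i}(t)\ge0$ red balls (if red drawn) or $\Delta_{b,i}(t)\ge0$ black balls (if black drawn) are added to node $i$'s own urn. Let $X_{j,n}=T_j+\sum_{t=1}^n\big(Z_{j,t}\Delta_{r,j}(t)+(1-Z_{j,t})\Delta_{b,j}(t)\big)$ and $U_{j,n}=\big(R_j+\sum_{t=1}^nZ_{j,t}\Delta_{r,j}(t)\big)/X_{j,n}$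 (proportion of red balls in node $j$'s own urn after the $n$th draw), and $S_{i,n}=\sum_{j\in\mathcal{N}_i'}U_{j,n}X_{j,n}/\sum_{j\in\mathcal{N}_i'}X_{j,n}$ (proportion of red in node $i$'s super urn). Given the whole history $\{Z_j^{n-1}\}_{j=1}^N$, the time-$n$ draws are conditionally independent with $P(Z_{i,n}=1\mid\{Z_j^{n-1}\}_{j=1}^N)=S_{i,n-1}$. ''Martingale with respect to $\{Z_n\}$'' means $E|U_{i,n}|<\infty$ and $E[U_{i,n}\mid Z_1,\dots,Z_{n-1}]=U_{i,n-1}$ a.s. for all $n$. *)

(* Defs.v *)
From HB Require Import structures.
From mathcomp Require Import all_boot all_order all_algebra.
From mathcomp Require Import reals.
Set Implicit Arguments. Unset Strict Implicit. Unset Printing Implicit Defensive.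
Import Order.TTheory GRing.Theory Num.Theory.
Local Open Scope ring_scope.

(* A draw vector at one time is  z : {ffun 'I_N -> bool}  (z j = Z_{j,t}).
   A history Z_1,...,Z_n is a sequence  h : seq {ffun 'I_N -> bool}
   of size n, in time order (nth _ h t = Z_{t+1}).
   Parameters: initial red/black counts Rb Bb : 'I_N -> nat, and
   deterministic reinforcements Dr Db : 'I_N -> nat -> nat,
   Dr j t = Delta_{r,j}(t), Db j t = Delta_{b,j}(t).
   Graph: e : rel 'I_N (intended symmetric, irreflexive). *)

Section Polya.
Variable R : realType.
Variable N : nat.
Variables (e : rel 'I_N) (Rb Bb : 'I_N -> nat) (Dr Db : 'I_N -> nat -> nat).

Definition draw := {ffun 'I_N -> bool}.

Definition nbhd (i : 'I_N) : {set 'I_N} := [set j | e i j].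
Definition cnbhd (i : 'I_N) : {set 'I_N} := i |: nbhd i.

Definition red_count (j : 'I_N) (h : seq draw) : nat :=
  Rb j + \sum_(t < size h) (if nth [ffun=> false] h t j then Dr j t.+1 else 0).

Definition tot_count (j : 'I_N) (h : seq draw) : nat :=
  (Rb j + Bb j) +
  \sum_(t < size h) (if nth [ffun=> false] h t j then Dr j t.+1 else Db j t.+1).

Definition Uprop (j : 'I_N) (h : seq draw) : R :=
  (red_count j h)%:R / (tot_count j h)%:R.

Definition Sprop (i : 'I_N) (h : seq draw) : R :=
  (\sum_(j in cnbhd i) Uprop j h * (tot_count j h)%:R) /
  (\sum_(j in cnbhd i) (tot_count j h)%:R).

(* P(Z_{n+1} = z | history h), conditionally independent draws *)
Definition step_prob (h : seq draw) (z : draw) : R :=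
  \prod_(i : 'I_N) (if z i then Sprop i h else 1 - Sprop i h).

Definition hist_prob (h : seq draw) : R :=
  \prod_(t < size h) step_prob (take t h) (nth [ffun=> false] h t).

Definition cond_exp_U (i : 'I_N) (h : seq draw) : R :=
  \sum_(z : draw) step_prob h z * Uprop i (rcons h z).

(* {U_{i,n}} is a martingale w.r.t. {Z_n}: for every n >= 1,
   E[U_{i,n} | Z_1..Z_{n-1}] = U_{i,n-1} almost surely, i.e. on every
   history of length n-1 having positive probability.  (Integrability is
   automatic: U takes values in [0,1] and the sample space is discrete.) *)
Definition polya_martingale (i : 'I_N) : Prop :=
  forall n : nat, (0 < n)%N -> forall h : seq draw, size h = n.-1 ->
    0 < hist_prob h -> cond_exp_U i h = Uprop i h.

End Polya.

(* Main.v *)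
Require Import Defs.
From HB Require Import structures.
From mathcomp Require Import all_boot all_order all_algebra.
From mathcomp Require Import reals.
From mathcomp Require Import ring.
Import Order.TTheory GRing.Theory Num.Theory.
Local Open Scope ring_scope.
Lemma prod_sum1 (R : realType) (N : nat) (a : 'I_N -> R) :
  \sum_(z : {ffun 'I_N -> bool}) \prod_k (if z k then a k else 1 - a k) = 1.
Proof.
rewrite -(bigA_distr_bigA (fun k (b : bool) => if b then a k else 1 - a k)).
by apply: big1 => k _; rewrite big_bool /= addrCA subrr addr0.
Qed.

Lemma prod_marg (R : realType) (N : nat) (a : 'I_N -> R) (i : 'I_N) :
  \sum_(z : {ffun 'I_N -> bool})
     (\prod_k (if z k then a k else 1 - a k)) * (if z i then 1 else 0) = a i.
Proof.
pose G k (b : bool) := if b then a k else (if k == i then 0 else 1 - a k).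
rewrite (eq_bigr (fun z : {ffun 'I_N -> bool} => \prod_k G k (z k))); last first.
  move=> z _; case Hz: (z i).
    rewrite mulr1; apply: eq_bigr => k _; rewrite /G; case Hk: (z k) => //.
    by case: eqP => // E; rewrite E Hz in Hk.
  by rewrite mulr0 (bigD1 i) //= /G Hz eqxx mul0r.
rewrite -(bigA_distr_bigA G) (bigD1 i) //= [X in _ * X]big1 ?mulr1.
  by rewrite big_bool /G /= eqxx addr0.
by move=> k /negbTE kn; rewrite big_bool /G /= kn addrCA subrr addr0.
Qed.

Lemma tot_eq (N : nat) (Rb Bb : 'I_N -> nat) (Dr Db : 'I_N -> nat -> nat) D T j h :
  (forall j, Rb j + Bb j = T)%N -> (forall j t, Dr j t = D /\ Db j t = D) ->
  tot_count Rb Bb Dr Db j h = (T + size h * D)%N.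
Proof.
move=> HT HD; rewrite /tot_count HT; congr addn.
rewrite (eq_bigr (fun _ => D)) ?sum_nat_const ?card_ord //.
by move=> t _; case: (HD j t.+1) => -> ->; case: ifP.
Qed.

Lemma red_rcons (N : nat) (Rb : 'I_N -> nat) (Dr : 'I_N -> nat -> nat) D j h z :
  (forall t, Dr j t = D) ->
  red_count Rb Dr j (rcons h z) = (red_count Rb Dr j h + (if z j then D else 0))%N.
Proof.
move=> HD; rewrite /red_count size_rcons big_ord_recr /= nth_rcons ltnn eqxx HD -addnA.
congr addn; congr addn; apply: eq_bigr => t _; by rewrite nth_rcons ltn_ord.
Qed.
Arguments tot_eq {N Rb Bb Dr Db D T j h}.
Arguments red_rcons {N Rb Dr D j h z}.
Theorem theorem1 (R : realType) (N : nat) (e : rel 'I_N)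
    (Rb Bb : 'I_N -> nat) (Dr Db : 'I_N -> nat -> nat) (D T : nat) (i : 'I_N) :
  (1 < N)%N ->
  (forall u v, e u v = e v u) ->
  (forall u, ~~ e u u) ->
  (forall u v, connect e u v) ->
  (forall j, (0 < Rb j)%N) -> (forall j, (0 < Bb j)%N) ->
  (forall j, Rb j + Bb j = T)%N ->
  (0 < D)%N ->
  (forall j t, Dr j t = D /\ Db j t = D) ->
  polya_martingale R e Rb Bb Dr Db i <->
  (forall n : nat, (0 < n)%N -> forall h : seq (draw N), size h = n.-1 ->
     0 < hist_prob R e Rb Bb Dr Db h ->
     (#|nbhd e i|%:R)^-1 * \sum_(j in nbhd e i) Uprop R Rb Bb Dr Db j h
       = Uprop R Rb Bb Dr Db i h).
Proof.
move=> HN Hsym Hirr Hconn HR HB HT HD0 HD.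
have kpos : (0 < #|nbhd e i|)%N.
  have [v vi] : exists v : 'I_N, v != i.
    have h0 : (0 < N)%N by apply: ltn_trans HN.
    case: (eqVneq (Ordinal h0) i) => E; last by exists (Ordinal h0).
    exists (Ordinal HN); apply/eqP => E'; rewrite -E' in E.
    by move: E => /(congr1 val).
  move: (Hconn i v) => /connectP [p Hp Hl].
  case: p Hp Hl => [|x p] /=; first by move=> _ E; rewrite E eqxx in vi.
  move=> /andP [eix _] _; apply/card_gt0P; exists x; by rewrite inE.
have inotin : i \notin nbhd e i by rewrite inE Hirr.
have Tpos : (0 < T)%N by rewrite -(HT i) addn_gt0 HR.
suff key : forall h : seq (draw N),
  cond_exp_U R e Rb Bb Dr Db i h = Uprop R Rb Bb Dr Db i h <->
  (#|nbhd e i|%:R)^-1 * \sum_(j in nbhd e i) Uprop R Rb Bb Dr Db j h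
       = Uprop R Rb Bb Dr Db i h.
  split => H n n0 h sh hp; [apply/key | apply/key]; exact: H n0 h sh hp.
move=> h.
set k := #|nbhd e i|.
set X : R := (T + size h * D)%:R.
set X' : R := (T + (size h).+1 * D)%:R.
set r := fun j => (red_count Rb Dr j h)%:R : R.
set Sg := \sum_(j in nbhd e i) r j.
have Xpos : 0 < X by rewrite ltr0n addn_gt0 Tpos.
have X'pos : 0 < X' by rewrite ltr0n addn_gt0 Tpos.
have X'E : X' = X + D%:R by rewrite /X' /X mulSn addnCA natrD addrC.
have TE : forall j, tot_count Rb Bb Dr Db j h = (T + size h * D)%N.
  by move=> j; exact: tot_eq HT HD.
have UE : forall j, Uprop R Rb Bb Dr Db j h = r j / X.
  by move=> j; rewrite /Uprop TE.
have SE : Sprop R e Rb Bb Dr Db i h = (r i + Sg) / (k.+1%:R * X).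
  rewrite /Sprop.
  rewrite (eq_bigr (fun j => r j)); last first.
    by move=> j _; rewrite UE TE -/X divfK // gt_eqF.
  rewrite [Y in _ / Y](eq_bigr (fun j => X)); last by move=> j _; rewrite TE.
  rewrite sumr_const /cnbhd big_setU1 //= cardsU1 inotin /=.
  by rewrite add1n mulr_natl.
have CE : cond_exp_U R e Rb Bb Dr Db i h =
    r i / X' + Sprop R e Rb Bb Dr Db i h * (D%:R / X').
  rewrite /cond_exp_U.
  rewrite (eq_bigr (fun z => step_prob R e Rb Bb Dr Db h z * (r i / X') +
     (step_prob R e Rb Bb Dr Db h z * (if z i then 1 else 0)) * (D%:R / X'))); last first.
    move=> z _; rewrite /Uprop (red_rcons (fun t => proj1 (HD i t))).
    rewrite (tot_eq (h:=rcons h z) HT HD) size_rcons -/X' natrD -/(r i).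
    by case: (z i); rewrite ?mulr0n ?addr0 ?mulr0 ?mul0r ?addr0 ?mulr1 // -mulrDr mulrDl.
  rewrite big_split /= -mulr_suml -mulr_suml.
  by rewrite /step_prob (prod_sum1 _ _ (fun k => Sprop R e Rb Bb Dr Db k h)) (prod_marg _ _ (fun k => Sprop R e Rb Bb Dr Db k h)) mul1r.
rewrite CE SE UE.
rewrite (eq_bigr (fun j => r j / X)); last by move=> j _; rewrite UE.
rewrite -mulr_suml -/Sg.
have kne : (k%:R : R) != 0 by rewrite pnatr_eq0 -lt0n.
have Xne : X != 0 by rewrite gt_eqF.
have X'ne : X' != 0 by rewrite gt_eqF.
have Dne : (D%:R : R) != 0 by rewrite pnatr_eq0 -lt0n.
have k1ne : (k.+1%:R : R) != 0 by rewrite pnatr_eq0.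
have E1g : forall (x d ri sg kk : R), x != 0 -> x + d != 0 -> kk + 1 != 0 ->
    ri / (x + d) + (ri + sg) / ((kk + 1) * x) * (d / (x + d)) - ri / x =
    (sg - kk * ri) * (d / ((kk + 1) * x * (x + d))).
  by move=> x d ri sg kk H1 H2 H3; field; rewrite H1 H2 H3.
have E2g : forall (x ri sg kk : R), x != 0 -> kk != 0 ->
    kk^-1 * (sg / x) - ri / x = (sg - kk * ri) * (kk * x)^-1.
  by move=> x ri sg kk H1 H2; field; rewrite H1 H2.
have E1 : r i / X' + (r i + Sg) / (k.+1%:R * X) * (D%:R / X') - r i / X =
   (Sg - k%:R * r i) * (D%:R / (k.+1%:R * X * X')).
  rewrite X'E -natr1; apply: E1g => //; by rewrite -?X'E ?natr1.
have E2 : k%:R^-1 * (Sg / X) - r i / X = (Sg - k%:R * r i) * (k%:R * X)^-1.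
  exact: E2g.
have c1 : D%:R / (k.+1%:R * X * X') != 0 :> R.
  by rewrite mulf_neq0 // invr_neq0 // !mulf_neq0.
have c2 : (k%:R * X)^-1 != 0 :> R by rewrite invr_neq0 // mulf_neq0.
have F : forall a b c : R, a - b = c -> (a = b <-> c = 0).
  move=> a b c <-; split => [->|/eqP]; first by rewrite subrr.
  by rewrite subr_eq0 => /eqP.
rewrite (F _ _ _ E1) (F _ _ _ E2).
split => /eqP; rewrite mulf_eq0 ?(negbTE c1) ?(negbTE c2) orbF => /eqP ->;
  by rewrite mul0r.
Qed.
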